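(* For every integer $n\geqslant 1$, let $G_n$ be the complete directed graph on $n$ vertices (vertex set $[n]$, with a directed edge $\overrightarrow{xy}$ for every ordered pair $x\neq y$). Then for all $k=0,1,\ldots,n-1$, $$h_k(\Delta(G_n))={n-1\choose k}(n-1)^k .$$
   Context: For a finite directed graph $D$ (no loops, no multiple edges), the complex of directed trees $\Delta(D)$ is the simplicial complex whose vertices are the directed edges of $D$ and whose faces are the sets of directed edges of $D$ forming a directed forest, i.e. a vertex-disjoint union of rooted directed trees (a rooted directed tree with root $r$ is an acyclic digraph in which every vertex is reached from $r$ by a unique directed path); equivalently, a set of edges in which every vertex has in-degree at most $1$ and there is no directed cycle. For a $d$-dimensional simplicial complex $\Delta$ with $f_i$ faces of dimension $i$ ($f_{-1}=1$), the $h$-vector $(h_0,\ldots,h_{d+1})$ is defined by $h_k=\sum_{i=0}^{k}(-1)^{k-i}{d+1-i\choose d+1-k}f_{i-1}$. The complex $\Delta(G_n)$ has dimension $n-2$. *)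

(* Defs.v *)
From mathcomp Require Import all_boot all_order all_algebra.
Set Implicit Arguments. Unset Strict Implicit. Unset Printing Implicit Defensive.
Import GRing.Theory Num.Theory.

Definition indeg_le1 (V : finType) (F : {set V * V}) : bool :=
  [forall y : V, #|[set x : V | (x, y) \in F]| <= 1].

Definition has_dcycle (V : finType) (F : {set V * V}) : bool :=
  [exists x : V, [exists y : V,
     ((x, y) \in F) && connect (fun a b => (a, b) \in F) y x]].

Definition directed_forest (V : finType) (F : {set V * V}) : bool :=
  indeg_le1 F && ~~ has_dcycle F.

(* The complex of directed trees Delta(D) of a digraph D given by adj:
   faces = sets of edges of D forming a directed forest. *)
Definition is_face (V : finType) (adj : rel V) (F : {set V * V}) : bool :=
  [forall e in F, adj e.1 e.2] && directed_forest F.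

Definition complete_adj (n : nat) : rel 'I_n := fun x y => x != y.

Definition faces_of (V : finType) (adj : rel V) : {set {set V * V}} :=
  [set F : {set V * V} | is_face adj F].

(* number of faces with i elements, i.e. f_{i-1} *)
Definition fcount (T : finType) (K : {set {set T}}) (i : nat) : nat :=
  #|[set F in K | #|F| == i]|.

(* d+1 where d is the dimension: maximal face cardinality *)
Definition dim1 (T : finType) (K : {set {set T}}) : nat :=
  \max_(F in K) #|F|.

Definition hvec (T : finType) (K : {set {set T}}) (k : nat) : int :=
  \sum_(0 <= i < k.+1)
     ((-1) ^+ (k - i) * ('C(dim1 K - i, dim1 K - k))%:Z * (fcount K i)%:Z)%R.

(* Main.v *)
Require Import Defs.
From mathcomp Require Import all_boot all_order all_algebra.
From mathcomp Require Import ring.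
Import GRing.Theory Num.Theory.
Set Implicit Arguments. Unset Strict Implicit. Unset Printing Implicit Defensive.

Section Graph.
Variable V : finType.
Implicit Types (G F : {set V * V}).

Definition E G : rel V := fun a b => (a, b) \in G.
Definition root G (y : V) : bool := [forall x, (x, y) \notin G].

Lemma forest_indeg G : directed_forest G -> forall x1 x2 y,
  (x1, y) \in G -> (x2, y) \in G -> x1 = x2.
Proof.
case/andP=> /forallP H _ x1 x2 y h1 h2.
have /card_le1_eqP := H y; apply; by rewrite inE.
Qed.

Lemma forest_acyc G : directed_forest G -> forall x y,
  (x, y) \in G -> ~~ connect (E G) y x.
Proof.
case/andP=> _ H x y hxy; apply/negP=> c; case/negP: H.
by apply/existsP; exists x; apply/existsP; exists y; rewrite hxy.
Qed.

Lemma forestP G : (forall x1 x2 y, (x1, y) \in G -> (x2, y) \in G -> x1 = x2) ->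
  (forall x y, (x, y) \in G -> ~~ connect (E G) y x) -> directed_forest G.
Proof.
move=> H1 H2; apply/andP; split.
  apply/forallP=> y; apply/card_le1_eqP=> a b; rewrite !inE => ha hb.
  exact: H1 hb ha.
apply/existsP=> [[x /existsP [y /andP [hxy c]]]].
by move: (H2 _ _ hxy); rewrite /E c.
Qed.

Lemma sub_forest G F : G \subset F -> directed_forest F -> directed_forest G.
Proof.
move=> /subsetP sGF hF; apply: forestP.
  move=> x1 x2 y h1 h2; exact: (forest_indeg hF (sGF _ h1) (sGF _ h2)).
move=> x y hxy; apply/negP=> c.
have c' : connect (E F) y x.
  apply: (connect_sub _ c) => a b hab; apply: connect1; exact: sGF.
by move: (forest_acyc hF (sGF _ hxy)); rewrite c'.
Qed.

Lemma path_step G r v : connect (E G) r v -> r != v ->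
  exists2 q, (q, v) \in G & connect (E G) r q.
Proof.
case/connectP=> s; elim/last_ind: s => [|s q _] /=.
  by move=> _ ->; rewrite eqxx.
rewrite rcons_path last_rcons => /andP [ps e] -> _.
exists (last r s) => //; apply/connectP; by exists s.
Qed.

Definition anc G v := [set u | connect (E G) u v].

Lemma anc_lt G p v : directed_forest G -> (p, v) \in G -> #|anc G p| < #|anc G v|.
Proof.
move=> hF hpv; apply: proper_card; apply/properP; split.
  apply/subsetP=> u; rewrite !inE => c; apply: connect_trans c _.
  exact: connect1.
exists v; first by rewrite inE connect0.
rewrite /anc inE. exact: (@forest_acyc G hF p v hpv).
Qed.

Lemma nonroot G v : ~~ root G v -> exists p, (p, v) \in G.
Proof. by case/forallPn=> p; rewrite negbK; exists p. Qed.

Lemma v_anc G v : v \in anc G v.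
Proof. by rewrite inE connect0. Qed.

Lemma root_ex G v : directed_forest G -> exists2 r, root G r & connect (E G) r v.
Proof.
move=> hF; move: {2}#|anc G v| (leqnn #|anc G v|) => m.
elim: m v => [|m IH] v hm.
  by move: hm; rewrite leqn0 => /eqP/cards0_eq h; move: (v_anc G v); rewrite h inE.
case hr: (root G v); first by exists v => //; exact: connect0.
case: (nonroot (negbT hr)) => p hp.
have [r hr' c] := IH p (leq_trans (anc_lt hF hp) hm) .
exists r => //; apply: connect_trans c _; exact: connect1.
Qed.

Lemma root_uniq G v r1 r2 : directed_forest G -> root G r1 -> root G r2 ->
  connect (E G) r1 v -> connect (E G) r2 v -> r1 = r2.
Proof.
move=> hF; move: {2}#|anc G v| (leqnn #|anc G v|) => m.
elim: m v r1 r2 => [|m IH] v r1 r2 hm h1 h2 c1 c2.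
  by move: hm; rewrite leqn0 => /eqP/cards0_eq h; move: (v_anc G v); rewrite h inE.
have rootno r q : root G r -> (q, r) \in G -> False.
  by move=> /forallP/(_ q)/negP.
case: (eqVneq r1 v) => e1.
  case: (eqVneq r2 v) => e2; first by rewrite e1 e2.
  have [q hq _] := path_step c2 e2; subst r1; by case: (rootno _ _ h1 hq).
case: (eqVneq r2 v) => e2.
  have [q hq _] := path_step c1 e1; subst r2; by case: (rootno _ _ h2 hq).
have [q1 hq1 d1] := path_step c1 e1.
have [q2 hq2 d2] := path_step c2 e2.
have eq := forest_indeg hF hq1 hq2; subst q2.
exact: (IH q1 r1 r2 (leq_trans (anc_lt hF hq1) hm) h1 h2 d1 d2).
Qed.

Lemma card_roots G : directed_forest G -> #|[set y | root G y]| = #|V| - #|G|.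
Proof.
move=> hF.
have -> : [set y | root G y] = ~: [set e.2 | e in G].
  apply/setP=> y; rewrite !inE; apply/idP/idP.
    move=> /forallP H; apply/imsetP=> [[[a b] hab /= eb]]; subst b.
    by move: (H a); rewrite hab.
  move=> hn; apply/forallP=> a; apply/negP=> hay; case/imsetP: hn.
  by exists (a, y).
rewrite cardsCs setCK card_in_imset //.
move=> [a b] [c d] hab hcd /= ebd; subst d.
by rewrite (forest_indeg hF hab hcd).
Qed.

Lemma connectU G x y u w : connect (E ((x, y) |: G)) u w ->
  connect (E G) u w \/ (connect (E G) u x /\ connect (E G) y w).
Proof.
case/connectP=> s; elim: s u => [|c s IH] u /=.
  by move=> _ ->; left; exact: connect0.
case/andP=> huc ps ew; have := IH c ps ew.
move: huc; rewrite /E !inE => /orP [/eqP [-> ->] | huc].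
  case=> [h | [_ h]]; by right; split => //; exact: connect0.
have cuc : connect (E G) u c by exact: connect1.
case=> [h | [h1 h2]].
  by left; exact: connect_trans cuc h.
by right; split => //; exact: connect_trans cuc h1.
Qed.

Lemma connect_U G e u w : connect (E G) u w -> connect (E (e |: G)) u w.
Proof.
move=> c; apply: (connect_sub _ c) => a b hab; apply: connect1.
by move: hab; rewrite /E inE => ->; rewrite orbT.
Qed.

Lemma addableP G x y : directed_forest G ->
  ((x, y) \notin G) && directed_forest ((x, y) |: G) =
  root G y && ~~ connect (E G) y x.
Proof.
move=> hF; apply/idP/idP.
  case/andP=> hn hF'; apply/andP; split.
    apply/forallP=> z; apply/negP=> hz.
    have h1 : (z, y) \in (x, y) |: G by rewrite inE hz orbT.
    have ezx := forest_indeg hF' h1 (setU11 _ _).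
    by subst z; rewrite hz in hn.
  apply/negP=> c; have := forest_acyc hF' (setU11 _ _).
  by rewrite connect_U.
case/andP=> hr hnc; apply/andP; split.
  by apply/negP=> hin; move: hr => /forallP/(_ x); rewrite hin.
apply: forestP.
  move=> x1 x2 z; rewrite !inE => /orP [/eqP [e1 e3] | h1] /orP [/eqP [e2 e4] | h2].
  - by rewrite e1 e2.
  - by subst z; move: hr => /forallP/(_ x2); rewrite h2.
  - by subst z; move: hr => /forallP/(_ x1); rewrite h1.
  - exact: (@forest_indeg G hF x1 x2 z h1 h2).
move=> a b; rewrite !inE => /orP [/eqP [-> ->] | hab].
  apply/negP=> /connectU [h | [h _]]; by rewrite h in hnc.
apply/negP=> /connectU [h | [h1 h2]].
  by move: (@forest_acyc G hF a b hab); rewrite h.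
suff : connect (E G) y x by rewrite (negbTE hnc).
apply: connect_trans h2 _; apply: connect_trans _ h1; exact: connect1.
Qed.

Lemma sum_card (T : finType) (P : pred T) : \sum_(x : T) (P x : nat) = #|[set x | P x]|.
Proof.
rewrite -sum1_card [in RHS]big_mkcond /=; apply: eq_bigr => x _; rewrite inE; by case: (P x).
Qed.

Lemma card_addable G : directed_forest G ->
  \sum_(e : V * V) ((e \notin G) && directed_forest (e |: G) : nat) =
  #|V| * (#|V| - #|G| - 1).
Proof.
move=> hF.
rewrite (eq_bigr (fun e => (root G e.2 && ~~ connect (E G) e.2 e.1 : nat))); last first.
  by move=> [x y] _; rewrite addableP.
rewrite -(pair_bigA _ (fun x y => (root G y && ~~ connect (E G) y x : nat))) /=.
rewrite exchange_big /=.
set S := \sum_y _.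
have H1 : \sum_(y : V) \sum_(x : V) (root G y && connect (E G) y x : nat) = #|V|.
  rewrite exchange_big /= -sum1_card; apply: eq_bigr => x _.
  rewrite sum_card; apply/eqP/cards1P.
  have [r hr c] := root_ex x hF; exists r; apply/setP=> z; rewrite !inE.
  apply/idP/eqP; last by move=> ->; rewrite hr c.
  case/andP=> hz cz; exact: root_uniq hF hz hr cz c.
have H2 : S + #|V| = (#|V| - #|G|) * #|V|.
  rewrite -[X in S + X = _]H1 /S -big_split /= -(card_roots hF) -sum_card big_distrl /=.
  apply: eq_bigr => y _; rewrite -big_split /=.
  case: (root G y) => /=.
    rewrite mul1n -sum1_card; apply: eq_bigr => x _.
    by case: (connect (E G) y x).
  by rewrite mul0n big1.
by rewrite mulnBr muln1 mulnC -H2 addnK.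
Qed.

Definition fc i := \sum_(F : {set V * V}) (directed_forest F && (#|F| == i) : nat).

Lemma fc_rec i : fc i.+1 * i.+1 = fc i * (#|V| * (#|V| - i - 1)).
Proof.
pose P := [set p : {set V * V} * (V * V) |
   directed_forest p.1 && (#|p.1| == i.+1) && (p.2 \in p.1)].
pose Q := [set p : {set V * V} * (V * V) |
   directed_forest p.1 && (#|p.1| == i) && ((p.2 \notin p.1) && directed_forest (p.2 |: p.1))].
have HP : #|P| = fc i.+1 * i.+1.
  rewrite /P -sum_card -(pair_bigA _ (fun F e =>
     (directed_forest F && (#|F| == i.+1) && (e \in F) : nat))) /fc big_distrl /=.
  apply: eq_bigr => F _.
  case: (directed_forest F && (#|F| == i.+1)) /andP => [[_ /eqP <-]|_] /=.
    by rewrite mul1n -sum1_card [in RHS]big_mkcond.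
  by rewrite big1.
have HQ : #|Q| = fc i * (#|V| * (#|V| - i - 1)).
  rewrite /Q -sum_card -(pair_bigA _ (fun F e =>
     (directed_forest F && (#|F| == i) &&
        ((e \notin F) && directed_forest (e |: F)) : nat))) /fc big_distrl /=.
  apply: eq_bigr => F _.
  case: (directed_forest F && (#|F| == i)) /andP => [[hF /eqP <-]|_] /=.
    by rewrite mul1n card_addable.
  by rewrite big1.
rewrite -HP -HQ.
have -> : Q = [set (p.1 :\ p.2, p.2) | p in P].
  apply/setP=> [[G e]]; rewrite inE /=; apply/idP/imsetP.
    case/andP=> /andP [hG /eqP hc] /andP [he hF].
    exists (e |: G, e); last by rewrite /= setU1K.
    by rewrite inE /= hF setU11 cardsU1 he hc eqxx.
  case=> [[F e'] hp [-> ->]] /=; move: hp; rewrite inE /= => /andP [/andP [hF /eqP hc] he].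
  rewrite setD1K // hF !andbT (sub_forest (subD1set F e') hF) /=.
  rewrite !inE eqxx /= andbT.
  by move: hc; rewrite (cardsD1 e') he add1n => [[->]].
rewrite card_in_imset //.
move=> [F e] [F' e'] /=; rewrite !inE /= => /andP [_ h1] /andP [_ h2] [eF ee].
by subst e'; rewrite -(setD1K h1) -(setD1K h2) eF.
Qed.

Lemma forest0 : directed_forest (set0 : {set V * V}).
Proof. by apply: forestP => [x1 x2 y|x y]; rewrite inE. Qed.

Lemma fc0 : fc 0 = 1.
Proof.
rewrite /fc sum_card; apply/eqP/cards1P; exists set0; apply/setP=> F.
rewrite !inE cards_eq0; apply/idP/idP => [/andP [_ ->] //|/eqP ->].
by rewrite forest0 eqxx.
Qed.

Lemma fc_formula i : fc i = 'C(#|V|.-1, i) * #|V| ^ i.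
Proof.
elim: i => [|i IH]; first by rewrite fc0 bin0.
apply/eqP; rewrite -(eqn_pmul2r (ltn0Sn i)) fc_rec IH.
have -> : #|V| - i - 1 = #|V|.-1 - i by rewrite -subnDA addnC subnDA subn1.
have Hb := mul_bin_left #|V|.-1 i; apply/eqP; rewrite expnS; transitivity (#|V| ^ i * #|V| * ((#|V|.-1 - i) * 'C(#|V|.-1, i))); first ring. rewrite -Hb; ring.
Qed.

End Graph.

Lemma trinom m k i : i <= k -> k <= m ->
  'C(m - i, m - k) * 'C(m, i) = 'C(m, k) * 'C(k, i).
Proof.
move=> hik hkm.
have e1 : m - k = (m - i) - (k - i) by rewrite subnBA // subnK // (leq_trans hik hkm).
rewrite e1 bin_sub; last by rewrite leq_sub2r.
apply/eqP; rewrite -(eqn_pmul2r (fact_gt0 (m - k))) -(eqn_pmul2r (fact_gt0 (k - i)))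
  -(eqn_pmul2r (fact_gt0 i)).
have f1 := bin_fact (leq_trans hik hkm).
have f2 : 'C(m - i, k - i) * ((k - i)`! * (m - k)`!) = (m - i)`!.
  by rewrite e1 bin_fact // leq_sub2r.
have f3 := bin_fact hkm.
have f4 := bin_fact hik.
apply/eqP.
transitivity ('C(m, i) * (i`! * ('C(m - i, k - i) * ((k - i)`! * (m - k)`!)))); first ring.
rewrite f2 f1.
transitivity ('C(m, k) * (('C(k, i) * (i`! * (k - i)`!)) * (m - k)`!)); last ring.
by rewrite f4 f3.
Qed.


Lemma PoszX (a b : nat) : Posz (a ^ b) = (Posz a ^+ b)%R.
Proof. by rewrite -!natz natrX. Qed.

Lemma alg (m k : nat) :
  (\sum_(i < k.+1) ((-1) ^+ (k - i) * (Posz ('C(m, k) * 'C(k, i))) * Posz (m.+1 ^ i)))%R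
  = Posz ('C(m, k) * m ^ k).
Proof.
have hm : Posz m = (-1 + Posz m.+1)%R by rewrite -addn1 PoszD; ring.
rewrite PoszM PoszX hm exprDn mulr_sumr.
apply: eq_bigr => i _.
rewrite -mulr_natr PoszM PoszX natz; ring.
Qed.

Lemma face_forest n (F : {set 'I_n * 'I_n}) :
  is_face (@complete_adj n) F = directed_forest F.
Proof.
rewrite /is_face; case hF: (directed_forest F); rewrite ?andbF ?andbT //.
apply/forall_inP => [[x y]] h /=; rewrite /complete_adj; apply/negP => /eqP exy.
subst y; move: (@forest_acyc _ F hF x x h); by rewrite connect0.
Qed.

Theorem mainTheorem1 (n : nat) (hn : 1 <= n) (k : nat) (hk : k <= n - 1) :
  hvec (faces_of (@complete_adj n)) k = (Posz ('C(n - 1, k) * (n - 1) ^ k)).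
Proof.
set K := faces_of (@complete_adj n).
have Hf i : fcount K i = 'C(n - 1, i) * n ^ i.
  have -> : fcount K i = fc ('I_n) i.
    rewrite /fc sum_card /fcount; apply: eq_card => F; rewrite !inE face_forest //.
  by rewrite fc_formula card_ord subn1.
have Hd : dim1 K = n - 1.
  apply/eqP; rewrite eqn_leq; apply/andP; split.
    apply/bigmax_leqP => F hF.
    have : 0 < fcount K #|F| by apply/card_gt0P; exists F; rewrite inE hF eqxx.
    by rewrite Hf muln_gt0 bin_gt0 => /andP [].
  have : 0 < fcount K (n - 1) by rewrite Hf muln_gt0 bin_gt0 leqnn expn_gt0 hn.
  case/card_gt0P => F; rewrite inE => /andP [hF /eqP <-]; exact: leq_bigmax_cond.
rewrite /hvec Hd big_mkord.
have en : (n - 1).+1 = n by rewrite subn1 prednK.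
rewrite -(alg (n - 1) k) en; apply: eq_bigr => i _.
have hi : i <= k by rewrite -ltnS ltn_ord.
rewrite Hf -(trinom hi hk) !PoszM; ring.
Qed.
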